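(* Let $G$ be a compact graph in $\mathbb{R}^d$ and $C$ a finite $\epsilon$-sample of $G$, and fix $k\ge1$. If $|\mathrm{dgap}_k(G)|-|\mathrm{dgap}_{k+1}(G)|>8\epsilon$, then there is a bijection $\psi:\mathrm{DS}_k(G)\to\mathrm{DS}_k(C)$ of multisets with $\|q-\psi(q)\|_\infty\le\epsilon$ for all $q\in\mathrm{DS}_k(G)$.
   Context: Offsets $X^\alpha$: union of closed radius-$\alpha$ balls centred at points of $X$. $C$ is an $\epsilon$-sample of $G$ if $C\subseteq G^\epsilon$ and $G\subseteq C^\epsilon$. $\mathrm{PD}\{X^\alpha\}$: 1-dimensional $\mathbb{Z}_2$ persistence diagram of $\{X^\alpha\}$, dots $(x,y)=$(birth, death) with multiplicity plus the diagonal with infinite multiplicity; off-diagonal parts assumed finite. Known stability fact: there is a bijection $\psi:\mathrm{PD}\{G^\alpha\}\to\mathrm{PD}\{C^\alpha\}$ with $\|q-\psi(q)\|_\infty\le\epsilon$ for all $q$ ($L_\infty$ distance $\max\{|x_1-x_2|,|y_1-y_2|\}$). Diagonal gaps of a diagram: let $0<a_1<\dots<a_n$ be the distinct values of $y-x$ over off-diagonal dots and $a_0=0$; diagonal gaps are $\{a_{j-1}<y-x<a_j\}$, width $a_j-a_{j-1}$; ranked by width with ties broken so the lower gap counts as wider; $\mathrm{dgap}_k$ is the $k$-th widest, $|\mathrm{dgap}_k|$ its width ($0$ if $k>n$). $\mathrm{DS}_k$ is the multiset of dots above the lowest of $\mathrm{dgap}_1,\dots,\mathrm{dgap}_k$.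 Notation $\mathrm{dgap}_k(X),\mathrm{DS}_k(X)$ refers to $\mathrm{PD}\{X^\alpha\}$. *)

(* Defs.v *)
From Stdlib Require Import Reals Lra Lia List Permutation.
Import ListNotations.
Open Scope R_scope.

(* A persistence diagram is represented by the finite multiset (list) of its
   off-diagonal dots (birth, death); the diagonal (infinite multiplicity) is
   implicit. *)
Definition dot := (R * R)%type.
Definition diagram := list dot.

Definition pers (p : dot) : R := snd p - fst p.

Definition linf (p q : dot) : R :=
  Rmax (Rabs (fst p - fst q)) (Rabs (snd p - snd q)).

Definition off_diagonal (D : diagram) : Prop := Forall (fun p => fst p < snd p) D.

(* Bijection between full diagrams (dots + diagonal with infinite multiplicity)
   moving every point by at most eps in L_infinity: matched dot pairs M, and
   dots U1 / U2 matched to diagonal points.  The L_inf distance of (x,y) to the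
   diagonal is (y-x)/2. Diagonal-to-diagonal pairs are irrelevant. *)
Definition eps_matching (eps : R) (D1 D2 : diagram) : Prop :=
  exists (M : list (dot * dot)) (U1 U2 : diagram),
    Permutation D1 (map fst M ++ U1) /\
    Permutation D2 (map snd M ++ U2) /\
    Forall (fun pq => linf (fst pq) (snd pq) <= eps) M /\
    Forall (fun p => pers p / 2 <= eps) U1 /\
    Forall (fun p => pers p / 2 <= eps) U2.

Definition eps_bijection (eps : R) (D1 D2 : diagram) : Prop :=
  exists M : list (dot * dot),
    Permutation D1 (map fst M) /\
    Permutation D2 (map snd M) /\
    Forall (fun pq => linf (fst pq) (snd pq) <= eps) M.

Definition vals (D : diagram) : list R := nodup Req_EM_T (map pers D).

(* A gap {a_{j-1} < y-x < a_j} is identified by its upper end a = a_j.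
   lower end a_{j-1}: largest value below a, or a_0 = 0. *)
Definition gap_lo (D : diagram) (a : R) : R :=
  fold_right (fun v acc => if Rlt_dec v a then Rmax v acc else acc) 0 (vals D).

Definition gap_width (D : diagram) (a : R) : R := a - gap_lo D a.

Definition widerb (D : diagram) (a b : R) : bool :=
  if Rlt_dec (gap_width D b) (gap_width D a) then true
  else if Req_EM_T (gap_width D a) (gap_width D b) then
         (if Rlt_dec a b then true else false)
       else false.

Definition gap_rank (D : diagram) (a : R) : nat :=
  S (length (filter (fun b => widerb D b a) (vals D))).

(* |dgap_k| : width of the k-th widest gap, 0 if k > n *)
Definition dgap_width (D : diagram) (k : nat) : R :=
  fold_right (fun a acc => if Nat.eqb (gap_rank D a) k then gap_width D a else acc)
             0 (vals D).

Definition top_gaps (D : diagram) (k : nat) : list R :=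
  filter (fun a => Nat.leb (gap_rank D a) k) (vals D).

(* DS_k : multiset of dots above the lowest of dgap_1..dgap_k, i.e. dots with
   y - x >= upper end of that lowest gap. *)
Definition DS (D : diagram) (k : nat) : diagram :=
  match top_gaps D k with
  | [] => []
  | a :: l =>
      let amin := fold_right Rmin a l in
      filter (fun p => if Rle_dec amin (pers p) then true else false) D
  end.

(* Main.v *)
Require Import Defs.
From Stdlib Require Import Reals Lra Lia List Permutation Classical Bool.
Import ListNotations.
Open Scope R_scope.

Lemma perm_filter {A} (f : A -> bool) l l' :
  Permutation l l' -> Permutation (filter f l) (filter f l').
Proof.
  induction 1; simpl; auto.
  - destruct (f x); auto.
  - destruct (f x), (f y); auto. apply perm_swap.
  - eapply perm_trans; eauto.
Qed.

Lemma filter_map_comm {A B} (f : B -> bool) (g : A -> B) l :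
  filter f (map g l) = map g (filter (fun x => f (g x)) l).
Proof. induction l; simpl; auto. destruct (f (g a)); simpl; congruence. Qed.

Lemma filter_all_false {A} (f : A -> bool) l :
  (forall x, In x l -> f x = false) -> filter f l = [].
Proof. induction l; simpl; intros H; auto. rewrite H; auto. Qed.

Lemma filter_length_lt {A} (P Q : A -> bool) l y :
  (forall x, In x l -> P x = true -> Q x = true) -> In y l -> P y = false -> Q y = true ->
  (length (filter P l) < length (filter Q l))%nat.
Proof.
  induction l as [|a l IH]; simpl; intros H Hy HP HQ; [contradiction|].
  assert (Hle : forall l', (forall x, In x l' -> P x = true -> Q x = true) ->
     (length (filter P l') <= length (filter Q l'))%nat).
  { induction l' as [|b l' IH']; simpl; intros H'; auto.
    destruct (P b) eqn:E1; [rewrite (H' b (or_introl eq_refl) E1); simpl|destruct (Q b); simpl];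
    specialize (IH' (fun x Hx => H' x (or_intror Hx))); lia. }
  destruct Hy as [<-|Hy].
  - rewrite HP, HQ. simpl. specialize (Hle l (fun x Hx => H x (or_intror Hx))). lia.
  - specialize (IH (fun x Hx => H x (or_intror Hx)) Hy HP HQ).
    destruct (P a) eqn:E1; [rewrite (H a (or_introl eq_refl) E1); simpl|destruct (Q a); simpl]; lia.
Qed.

Lemma len_filter_orb (P : R -> bool) l b :
  NoDup l -> In b l -> P b = false ->
  length (filter (fun x => orb (P x) (if Req_EM_T x b then true else false)) l) =
  S (length (filter P l)).
Proof.
  induction l as [|a l IH]; simpl; intros ND Hin HP; [contradiction|].
  inversion ND; subst.
  destruct Hin as [<-|Hin].
  - rewrite HP. destruct (Req_EM_T a a); [|congruence]. simpl.
    f_equal. f_equal. apply filter_ext_in. intros x Hx.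
    destruct (Req_EM_T x a); [subst; contradiction|]. apply orb_false_r.
  - destruct (Req_EM_T a b); [subst; contradiction|].
    rewrite orb_false_r. destruct (P a); simpl; rewrite IH; auto.
Qed.

Lemma NoDup_map_in {A B} (f : A -> B) l :
  NoDup l -> (forall x y, In x l -> In y l -> f x = f y -> x = y) -> NoDup (map f l).
Proof.
  induction 1 as [|a l Ha ND IH]; simpl; intros H; constructor.
  - intros Hin. apply in_map_iff in Hin as [y [Hy Hyl]].
    assert (y = a) by (apply H; auto). subst; contradiction.
  - apply IH. intros; apply H; auto.
Qed.

Lemma exists_min_nat (l : list R) (P : R -> bool) (mu : R -> nat) :
  (exists x, In x l /\ P x = true) ->
  exists m, In m l /\ P m = true /\ forall x, In x l -> P x = true -> (mu m <= mu x)%nat.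
Proof.
  induction l as [|a l IH]; simpl; intros [x [Hx HP]]; [contradiction|].
  destruct (classic (exists x, In x l /\ P x = true)) as [E|NE].
  - destruct (IH E) as [m [Hm [HPm Hmin]]].
    destruct (P a) eqn:Ea.
    + destruct (Nat.le_gt_cases (mu a) (mu m)).
      * exists a; repeat split; auto. intros y [<-|Hy] Hpy; [lia|]. specialize (Hmin y Hy Hpy); lia.
      * exists m; repeat split; auto. intros y [<-|Hy] Hpy; [lia|auto].
    + exists m; repeat split; auto. intros y [<-|Hy] Hpy; [congruence|auto].
  - destruct Hx as [<-|Hx]; [|exfalso; apply NE; eauto].
    exists a; repeat split; auto. intros y [<-|Hy] Hpy; [lia|exfalso; apply NE; eauto].
Qed.

Lemma exists_min_R (l : list R) (P : R -> Prop) :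
  (exists x, In x l /\ P x) ->
  exists m, In m l /\ P m /\ forall x, In x l -> P x -> m <= x.
Proof.
  induction l as [|a l IH]; simpl; intros [x [Hx HP]]; [contradiction|].
  destruct (classic (exists x, In x l /\ P x)) as [E|NE].
  - destruct (IH E) as [m [Hm [HPm Hmin]]].
    destruct (classic (P a)) as [Pa|nPa].
    + destruct (Rle_dec a m).
      * exists a; repeat split; auto. intros y [<-|Hy] Hpy; [lra|]. specialize (Hmin y Hy Hpy); lra.
      * exists m; repeat split; auto. intros y [<-|Hy] Hpy; [lra|auto].
    + exists m; repeat split; auto. intros y [<-|Hy] Hpy; [subst; contradiction|auto].
  - destruct Hx as [<-|Hx]; [|exfalso; apply NE; eauto].
    exists a; repeat split; auto. intros y [<-|Hy] Hpy; [lra|exfalso; apply NE; eauto].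
Qed.

Lemma fold_min (x : R) l :
  In (fold_right Rmin x l) (x :: l) /\ forall y, In y (x :: l) -> fold_right Rmin x l <= y.
Proof.
  induction l as [|a l [IH1 IH2]]; simpl.
  - split; auto. intros y [H|[]]; subst; lra.
  - assert (Hm1 := Rmin_l a (fold_right Rmin x l)).
    assert (Hm2 := Rmin_r a (fold_right Rmin x l)).
    split.
    + destruct (Rle_dec a (fold_right Rmin x l)).
      * rewrite Rmin_left by lra. right; left; auto.
      * rewrite Rmin_right by lra. simpl in IH1; simpl; tauto.
    + intros y [H|[H|Hy]].
      * specialize (IH2 y (or_introl H)); lra.
      * subst; lra.
      * specialize (IH2 y (or_intror Hy)); lra.
Qed.
Arguments gap_rank : simpl never.
Arguments Nat.eqb : simpl never.
Definition glo (l : list R) (a : R) : R :=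
  fold_right (fun v acc => if Rlt_dec v a then Rmax v acc else acc) 0 l.

Lemma gap_lo_glo D a : gap_lo D a = glo (vals D) a.
Proof. reflexivity. Qed.

Lemma glo_ge0 l a : 0 <= glo l a.
Proof.
  induction l; simpl; [lra|]. destruct (Rlt_dec a0 a); auto.
  eapply Rle_trans; [exact IHl| apply Rmax_r].
Qed.

Lemma glo_ge l a v : In v l -> v < a -> v <= glo l a.
Proof.
  induction l as [|b l IH]; simpl; intros Hv Hlt; [contradiction|].
  destruct Hv as [Hbv|Hv].
  - subst b. destruct (Rlt_dec v a); [apply Rmax_l|contradiction].
  - destruct (Rlt_dec b a); auto. eapply Rle_trans; [apply IH; auto|apply Rmax_r].
Qed.

Lemma glo_le l a U : 0 <= U -> (forall v, In v l -> v < a -> v <= U) -> glo l a <= U.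
Proof.
  induction l as [|b l IH]; simpl; intros H0 H; auto.
  destruct (Rlt_dec b a).
  - apply Rmax_lub; auto.
  - auto.
Qed.

Lemma glo_cases l a : glo l a = 0 \/ (In (glo l a) l /\ glo l a < a).
Proof.
  induction l as [|b l IH]; simpl; auto.
  destruct (Rlt_dec b a); [|destruct IH as [H|[H1 H2]]; auto].
  destruct (Rle_dec b (glo l a)).
  - rewrite Rmax_right by lra. destruct IH as [H|[H1 H2]]; [|auto].
    rewrite H. assert (H0 := glo_ge0 l a). lra.
  - rewrite Rmax_left by lra. auto.
Qed.

Lemma vals_in D v : In v (vals D) <-> exists p, In p D /\ pers p = v.
Proof.
  unfold vals. rewrite nodup_In, in_map_iff. split; intros [p [H1 H2]]; eauto.
Qed.

Lemma vals_pos D v : off_diagonal D -> In v (vals D) -> 0 < v.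
Proof.
  intros HD Hv. apply vals_in in Hv as [p [Hp <-]].
  unfold off_diagonal in HD. rewrite Forall_forall in HD. specialize (HD p Hp).
  unfold pers; lra.
Qed.

Lemma width_pos D a : off_diagonal D -> In a (vals D) -> 0 < gap_width D a.
Proof.
  intros HD Ha. unfold gap_width. rewrite gap_lo_glo.
  destruct (glo_cases (vals D) a) as [H|[H1 H2]].
  - rewrite H. assert (0 < a) by (eapply vals_pos; eauto). lra.
  - lra.
Qed.

Lemma width_le_val D a : gap_width D a <= a.
Proof. unfold gap_width. rewrite gap_lo_glo. assert (H := glo_ge0 (vals D) a). lra. Qed.

Lemma widerb_irrefl D a : widerb D a a = false.
Proof.
  unfold widerb. destruct (Rlt_dec _ _); [lra|]. destruct (Req_EM_T _ _); auto.
  destruct (Rlt_dec a a); auto; lra.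
Qed.

Lemma widerb_width D a b : widerb D a b = true -> gap_width D b <= gap_width D a.
Proof.
  unfold widerb. destruct (Rlt_dec _ _); [lra|]. destruct (Req_EM_T _ _); [lra|].
  discriminate.
Qed.

Lemma width_widerb D a b : gap_width D b < gap_width D a -> widerb D a b = true.
Proof. unfold widerb. destruct (Rlt_dec _ _); auto; lra. Qed.

Lemma widerb_spec D a b : widerb D a b = true <->
  gap_width D b < gap_width D a \/ (gap_width D a = gap_width D b /\ a < b).
Proof.
  unfold widerb. destruct (Rlt_dec _ _); [split; auto|].
  destruct (Req_EM_T _ _); destruct (Rlt_dec a b); split; intros H; auto; try discriminate;
  destruct H as [H|[H1 H2]]; lra.
Qed.

Lemma widerb_trans D a b c : widerb D a b = true -> widerb D b c = true -> widerb D a c = true.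
Proof. rewrite !widerb_spec. lra. Qed.

Lemma widerb_total D a b : a <> b -> widerb D a b = true \/ widerb D b a = true.
Proof.
  intros H. rewrite !widerb_spec.
  destruct (Rtotal_order (gap_width D a) (gap_width D b)) as [H1|[H1|H1]]; [lra| |lra].
  destruct (Rtotal_order a b) as [H2|[H2|H2]]; [lra|contradiction|lra].
Qed.

Lemma rank_lt D a b : In a (vals D) -> widerb D a b = true ->
  (gap_rank D a < gap_rank D b)%nat.
Proof.
  intros Ha Hab. unfold gap_rank. apply -> Nat.succ_lt_mono.
  apply (filter_length_lt _ _ _ a); auto.
  - intros x _ Hx. eapply widerb_trans; eauto.
  - apply widerb_irrefl.
Qed.

Lemma rank_le_wider D a b : In a (vals D) -> In b (vals D) -> a <> b ->
  (gap_rank D a <= gap_rank D b)%nat -> widerb D a b = true.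
Proof.
  intros Ha Hb Hne Hle. destruct (widerb_total D a b Hne) as [H|H]; auto.
  apply rank_lt in H; auto. lia.
Qed.

Lemma dgap_spec D k b : In b (vals D) -> gap_rank D b = k -> dgap_width D k = gap_width D b.
Proof.
  intros Hb Hr. unfold dgap_width.
  assert (Huniq : forall x, In x (vals D) -> gap_rank D x = k -> x = b).
  { intros x Hx Hxr. destruct (Req_EM_T x b) as [|Hne]; auto.
    destruct (widerb_total D x b Hne) as [H|H]; apply rank_lt in H; auto; lia. }
  revert Hb Huniq. generalize (vals D). intros l Hb Huniq.
  induction l as [|x l IH]; simpl in *; [contradiction|].
  destruct (Nat.eqb (gap_rank D x) k) eqn:E.
  - apply Nat.eqb_eq in E. rewrite (Huniq x); auto.
  - destruct Hb as [<-|Hb]; [apply Nat.eqb_neq in E; contradiction|]. auto.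
Qed.

Lemma dgap_cases D k : dgap_width D k = 0 \/
  exists b, In b (vals D) /\ gap_rank D b = k /\ dgap_width D k = gap_width D b.
Proof.
  destruct (classic (exists b, In b (vals D) /\ gap_rank D b = k)) as [[b [H1 H2]]|NE].
  - right. exists b. repeat split; auto. apply dgap_spec; auto.
  - left. unfold dgap_width.
    assert (forall x, In x (vals D) -> gap_rank D x <> k) by (intros x Hx Hr; apply NE; eauto).
    revert H. generalize (vals D). induction l; simpl; intros H; auto.
    destruct (Nat.eqb (gap_rank D a) k) eqn:E; [apply Nat.eqb_eq in E; exfalso; eapply H; eauto|].
    auto.
Qed.

Lemma dgap_nonneg D k : off_diagonal D -> 0 <= dgap_width D k.
Proof.
  intros HD. destruct (dgap_cases D k) as [H|[b [H1 [H2 H3]]]]; [lra|].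
  rewrite H3. left. apply width_pos; auto.
Qed.

Lemma top_in D k a : In a (top_gaps D k) <-> In a (vals D) /\ (gap_rank D a <= k)%nat.
Proof. unfold top_gaps. rewrite filter_In, Nat.leb_le. tauto. Qed.

Lemma vals_nodup D : NoDup (vals D).
Proof. apply NoDup_nodup. Qed.

Lemma G_len D k : (1 <= k)%nat -> dgap_width D k <> 0 -> length (top_gaps D k) = k.
Proof.
  intros Hk Hw. destruct (dgap_cases D k) as [H|[b [Hb [Hr _]]]]; [contradiction|].
  unfold top_gaps.
  rewrite (filter_ext_in _ (fun x => orb (widerb D x b) (if Req_EM_T x b then true else false))).
  - rewrite len_filter_orb; auto using vals_nodup, widerb_irrefl.
  - intros x Hx. apply eq_true_iff_eq. rewrite Nat.leb_le, orb_true_iff. split.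
    + intros Hle. destruct (Req_EM_T x b) as [E|E]; [right; auto|left].
      apply rank_le_wider; auto. lia.
    + intros [H|H]; [apply rank_lt in H; auto; lia|].
      destruct (Req_EM_T x b); [subst; lia|discriminate].
Qed.

Lemma G_top_width D k a : off_diagonal D -> In a (top_gaps D k) -> dgap_width D k <= gap_width D a.
Proof.
  intros HD Ha. apply top_in in Ha as [Ha Hr].
  destruct (dgap_cases D k) as [H|[b [Hb [Hbr H]]]].
  - rewrite H. left. apply width_pos; auto.
  - rewrite H. destruct (Req_EM_T a b) as [->|Hne]; [lra|].
    apply widerb_width, rank_le_wider; auto. lia.
Qed.

Lemma G_rest_width D k a : (1 <= k)%nat -> dgap_width D k <> 0 ->
  In a (vals D) -> ~ In a (top_gaps D k) -> gap_width D a <= dgap_width D (S k).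
Proof.
  intros Hk Hw Ha Hna.
  assert (Hlen := G_len D k Hk Hw).
  destruct (exists_min_nat (vals D) (fun x => Nat.ltb k (gap_rank D x)) (gap_rank D))
    as [m [Hm [HPm Hmin]]].
  { exists a. split; auto. apply Nat.ltb_lt. destruct (Nat.le_gt_cases (gap_rank D a) k); auto.
    exfalso; apply Hna, top_in; auto. }
  apply Nat.ltb_lt in HPm.
  assert (Hrm : gap_rank D m = S k).
  { unfold gap_rank at 1. f_equal. rewrite <- Hlen. unfold top_gaps. f_equal.
    apply filter_ext_in. intros x Hx. apply eq_true_iff_eq. rewrite Nat.leb_le. split.
    - intros H. apply rank_lt in H; auto.
      destruct (Nat.le_gt_cases (gap_rank D x) k); auto.
      specialize (Hmin x Hx (proj2 (Nat.ltb_lt _ _) H0)). lia.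
    - intros H. apply rank_le_wider; auto; [intros ->; lia|lia]. }
  rewrite (dgap_spec D (S k) m); auto.
  destruct (Req_EM_T a m) as [->|Hne]; [lra|].
  apply widerb_width, rank_le_wider; auto.
  assert (Hra : (k < gap_rank D a)%nat).
  { destruct (Nat.le_gt_cases (gap_rank D a) k); auto. exfalso; apply Hna, top_in; auto. }
  lia.
Qed.

Lemma C_rank D k B : NoDup B -> length B = k -> incl B (vals D) ->
  (forall b c, In b B -> In c (vals D) -> ~ In c B -> gap_width D c < gap_width D b) ->
  forall c, In c (vals D) -> (In c (top_gaps D k) <-> In c B).
Proof.
  intros ND Hlen Hinc Hsep c Hc. rewrite top_in. split.
  - intros [_ Hr]. apply NNPP. intros HnB.
    assert (incl B (filter (fun x => widerb D x c) (vals D))).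
    { intros b Hb. apply filter_In. split; auto. apply width_widerb, Hsep; auto. }
    apply NoDup_incl_length in H; auto. unfold gap_rank in Hr. lia.
  - intros HB. split; auto.
    assert (incl (c :: filter (fun x => widerb D x c) (vals D)) B).
    { intros x [<-|Hx]; auto. apply filter_In in Hx as [Hx Hw].
      apply NNPP. intros HnB. specialize (Hsep c x HB Hx HnB).
      apply widerb_width in Hw. lra. }
    apply NoDup_incl_length in H.
    + simpl in H. unfold gap_rank. lia.
    + constructor. * intros Hin. apply filter_In in Hin as [_ Hw]. rewrite widerb_irrefl in Hw. discriminate.
      * apply NoDup_filter, vals_nodup.
Qed.

Fixpoint lowest_above (l : list R) (t : R) : option R :=
  match l with
  | [] => None
  | v :: l' => let r := lowest_above l' t in
      if Rle_dec t v then match r with None => Some v | Some m => Some (Rmin v m) end else r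
  end.

Definition fC (l : list R) (t : R) : R :=
  match lowest_above l t with Some m => m | None => 0 end.

Lemma lowest_gen l t : match lowest_above l t with
  | None => forall v, In v l -> ~ t <= v
  | Some m => In m l /\ t <= m /\ forall v, In v l -> t <= v -> m <= v end.
Proof.
  induction l as [|a l IH]; simpl; [intros; auto|].
  destruct (lowest_above l t) as [m|] eqn:E; destruct (Rle_dec t a).
  - destruct IH as [H1 [H2 H3]].
    assert (Hm1 := Rmin_l a m). assert (Hm2 := Rmin_r a m).
    split; [|split].
    + destruct (Rle_dec a m); [rewrite Rmin_left by lra; auto|rewrite Rmin_right by lra; auto].
    + unfold Rmin; destruct (Rle_dec a m); lra.
    + intros v [<-|Hv] Hle; auto. specialize (H3 v Hv Hle); lra.
  - destruct IH as [H1 [H2 H3]]. split; auto. split; auto.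
    intros v [<-|Hv] Hle; [contradiction|auto].
  - split; auto. split; auto. intros v [<-|Hv] Hle; [lra|]. exfalso; eapply IH; eauto.
  - intros v [<-|Hv]; auto.
Qed.

Lemma fC_spec l t : (exists v, In v l /\ t <= v) ->
  In (fC l t) l /\ t <= fC l t /\ forall v, In v l -> t <= v -> fC l t <= v.
Proof.
  intros [v [Hv Hle]]. unfold fC. assert (H := lowest_gen l t).
  destruct (lowest_above l t); auto. exfalso; eapply H; eauto.
Qed.

Lemma Rabs_inv x e : Rabs x <= e -> - e <= x <= e.
Proof. unfold Rabs; destruct (Rcase_abs x); lra. Qed.

Lemma linf_pers p q e : linf p q <= e -> Rabs (pers p - pers q) <= 2 * e.
Proof.
  unfold linf, pers. intros H.
  assert (H1 := Rmax_l (Rabs (fst p - fst q)) (Rabs (snd p - snd q))).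
  assert (H2 := Rmax_r (Rabs (fst p - fst q)) (Rabs (snd p - snd q))).
  apply Rabs_le.
  assert (A1 : Rabs (fst p - fst q) <= e) by lra.
  assert (A2 : Rabs (snd p - snd q) <= e) by lra.
  apply Rabs_inv in A1. apply Rabs_inv in A2. lra.
Qed.

Lemma width_le_diff D a a' : In a (vals D) -> a < a' -> gap_width D a' <= a' - a.
Proof. intros. unfold gap_width. rewrite gap_lo_glo. assert (a <= glo (vals D) a') by (apply glo_ge; auto). lra. Qed.

Lemma degenerate_empty eps D U : eps < 0 -> off_diagonal D ->
  (forall p, In p U -> pers p / 2 <= eps) -> Permutation D U -> D = [].
Proof.
  intros He HD FU P. destruct U as [|p U].
  { apply Permutation_nil. apply Permutation_sym; auto. }
  exfalso. specialize (FU p (or_introl eq_refl)).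
  assert (In p D) by (eapply Permutation_in; [apply Permutation_sym; exact P|left; auto]).
  unfold off_diagonal in HD; rewrite Forall_forall in HD. specialize (HD p H).
  unfold pers in FU. lra.
Qed.

Theorem mainTheorem12 (PDG PDC : diagram) (eps : R) (k : nat) :
  off_diagonal PDG -> off_diagonal PDC ->
  eps_matching eps PDG PDC ->
  (1 <= k)%nat ->
  dgap_width PDG k - dgap_width PDG (S k) > 8 * eps ->
  eps_bijection eps (DS PDG k) (DS PDC k).
Proof.
  intros HG HC [M [U1 [U2 [P1 [P2 [FM [FU1 FU2]]]]]]] Hk Hgap.
  rewrite Forall_forall in FM, FU1, FU2.
  assert (linf_nn : forall p q, 0 <= linf p q).
  { intros p q. unfold linf. eapply Rle_trans; [apply Rabs_pos|apply Rmax_l]. }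
  destruct (Rlt_or_le eps 0) as [Hneg|Hpos].
  { assert (HM : M = []).
    { destruct M as [|pq M]; auto. specialize (FM pq (or_introl eq_refl)).
      specialize (linf_nn (fst pq) (snd pq)). lra. }
    subst M. simpl in P1, P2.
    assert (E1 := degenerate_empty eps PDG U1 Hneg HG FU1 P1).
    assert (E2 := degenerate_empty eps PDC U2 Hneg HC FU2 P2).
    subst. unfold DS, top_gaps, vals. simpl. exists []. repeat split; constructor. }
  assert (Hw1 := dgap_nonneg PDG (S k) HG).
  assert (Hwk0 : dgap_width PDG k <> 0) by lra.
  assert (Hlen := G_len PDG k Hk Hwk0).
  assert (HMp : forall pq, In pq M -> In (pers (fst pq)) (vals PDG) /\ In (pers (snd pq)) (vals PDC)
            /\ Rabs (pers (fst pq) - pers (snd pq)) <= 2*eps).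
  { intros pq Hpq. split; [|split].
    - apply vals_in. exists (fst pq). split; auto. eapply Permutation_in; [apply Permutation_sym, P1|].
      apply in_or_app; left; apply in_map; auto.
    - apply vals_in. exists (snd pq). split; auto. eapply Permutation_in; [apply Permutation_sym, P2|].
      apply in_or_app; left; apply in_map; auto.
    - apply linf_pers, FM; auto. }
  assert (M1 : forall v, In v (vals PDC) -> v <= 2*eps \/ exists g, In g (vals PDG) /\ Rabs (v - g) <= 2*eps).
  { intros v Hv. apply vals_in in Hv as [p [Hp <-]].
    apply (Permutation_in p P2) in Hp. apply in_app_or in Hp as [Hp|Hp].
    - right. apply in_map_iff in Hp as [pq [<- Hpq]]. destruct (HMp pq Hpq) as [H1 [H2 H3]].
      exists (pers (fst pq)). split; auto. rewrite Rabs_minus_sym; auto.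
    - left. specialize (FU2 p Hp). lra. }
  assert (M2 : forall g, In g (vals PDG) -> 2*eps < g -> exists v, In v (vals PDC) /\ Rabs (v - g) <= 2*eps).
  { intros g Hg Hlt. apply vals_in in Hg as [p [Hp <-]].
    apply (Permutation_in p P1) in Hp. apply in_app_or in Hp as [Hp|Hp].
    - apply in_map_iff in Hp as [pq [<- Hpq]]. destruct (HMp pq Hpq) as [H1 [H2 H3]].
      exists (pers (snd pq)). split; auto. rewrite Rabs_minus_sym; auto.
    - specialize (FU1 p Hp). lra. }
  assert (HT : forall a, In a (top_gaps PDG k) -> In a (vals PDG) /\ dgap_width PDG k <= gap_width PDG a
            /\ 8*eps < gap_width PDG a /\ gap_width PDG a <= a).
  { intros a Ha. assert (Ha' := proj1 (proj1 (top_in _ _ _) Ha)).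
    assert (H := G_top_width PDG k a HG Ha). assert (H2 := width_le_val PDG a).
    repeat split; auto; lra. }
  set (F := fun a => fC (vals PDC) (a - 2*eps)).
  assert (HF : forall a, In a (vals PDG) -> 2*eps < a -> In (F a) (vals PDC) /\ a - 2*eps <= F a
            /\ F a <= a + 2*eps /\ forall v, In v (vals PDC) -> a - 2*eps <= v -> F a <= v).
  { intros a Ha Hlt. unfold F. destruct (M2 a Ha Hlt) as [v [Hv Hva]]. apply Rabs_inv in Hva.
    destruct (fC_spec (vals PDC) (a - 2*eps)) as [H1 [H2 H3]]. { exists v; split; auto; lra. }
    repeat split; auto. specialize (H3 v Hv); lra. }
  assert (W1 : forall a, In a (top_gaps PDG k) -> gap_width PDG a - 4*eps <= gap_width PDC (F a)).
  { intros a Ha. destruct (HT a Ha) as [Hav [_ [H8 Hwa]]].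
    destruct (HF a Hav ltac:(lra)) as [F1 [F2 [F3 F4]]].
    unfold gap_width. rewrite !gap_lo_glo.
    assert (glo (vals PDC) (F a) <= glo (vals PDG) a + 2*eps).
    { apply glo_le. { assert (Hg := glo_ge0 (vals PDG) a). lra. }
      intros v Hv Hvlt.
      assert (v < a - 2*eps). { destruct (Rlt_or_le v (a-2*eps)); auto. specialize (F4 v Hv H); lra. }
      destruct (M1 v Hv) as [Hv2|[g [Hg Hvg]]].
      - assert (Hg0 := glo_ge0 (vals PDG) a). lra.
      - apply Rabs_inv in Hvg. assert (g <= glo (vals PDG) a) by (apply glo_ge; auto; lra). lra. }
    lra. }
  assert (W2 : forall c, In c (vals PDC) -> ~ In c (map F (top_gaps PDG k)) ->
            gap_width PDC c <= dgap_width PDG (S k) + 4*eps).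
  { intros c Hc HnB.
    assert (Hlo0 := glo_ge0 (vals PDC) c).
    unfold gap_width at 1. rewrite gap_lo_glo.
    destruct (M1 c Hc) as [Hc2|Hex].
    { lra. }
    destruct (exists_min_R (vals PDG) (fun g => Rabs (c - g) <= 2*eps) Hex) as [g [Hg [Hcg Hgmin]]].
    assert (Hcg' := Rabs_inv _ _ Hcg).
    destruct (classic (exists v, In v (vals PDC) /\ g - 2*eps <= v /\ v < c)) as [[v [Hv [Hv1 Hv2]]]|NE].
    { assert (v <= glo (vals PDC) c) by (apply glo_ge; auto). lra. }
    assert (Cmin : forall v, In v (vals PDC) -> g - 2*eps <= v -> c <= v).
    { intros v Hv Hle. destruct (Rlt_or_le v c); auto. exfalso; apply NE; eauto. }
    assert (Hlo : glo (vals PDG) g - 2*eps <= glo (vals PDC) c).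
    { destruct (glo_cases (vals PDG) g) as [H0|[Hg'1 Hg'2]]. { rewrite H0; lra. }
      set (g' := glo (vals PDG) g) in *.
      destruct (Rle_or_lt g' (2*eps)). { lra. }
      destruct (M2 g' Hg'1 H) as [v [Hv Hvg]]. apply Rabs_inv in Hvg.
      destruct (Rlt_or_le v c).
      - assert (v <= glo (vals PDC) c) by (apply glo_ge; auto). lra.
      - exfalso. assert (g <= g'). { apply Hgmin; auto. apply Rabs_le; lra. } lra. }
    assert (HgT : ~ In g (top_gaps PDG k)).
    { intros HgT. apply HnB. apply in_map_iff. exists g. split; auto.
      destruct (fC_spec (vals PDC) (g - 2*eps)) as [H1 [H2 H3]]. { exists c; split; auto; lra. }
      unfold F. apply Rle_antisym.
      - apply H3; auto; lra.
      - apply Cmin; auto. }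
    assert (Hwg := G_rest_width PDG k g Hk Hwk0 Hg HgT).
    unfold gap_width in Hwg. rewrite gap_lo_glo in Hwg. lra. }
  assert (NDT : NoDup (top_gaps PDG k)) by (apply NoDup_filter, vals_nodup).
  assert (Tsep : forall a a', In a (top_gaps PDG k) -> In a' (top_gaps PDG k) -> a < a' -> F a < F a').
  { intros a a' Ha Ha' Hlt. destruct (HT a Ha) as [Hav [_ [H8 Hwa]]].
    destruct (HT a' Ha') as [Hav' [_ [H8' Hwa']]].
    assert (Hd := width_le_diff PDG a a' Hav Hlt).
    destruct (HF a Hav ltac:(lra)) as [F1 [F2 [F3 F4]]].
    destruct (HF a' Hav' ltac:(lra)) as [G1 [G2 [G3 G4]]]. lra. }
  assert (NDB : NoDup (map F (top_gaps PDG k))).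
  { apply NoDup_map_in; auto. intros x y Hx Hy Hxy. destruct (Rtotal_order x y) as [H|[H|H]]; auto.
    - specialize (Tsep x y Hx Hy H); lra.
    - specialize (Tsep y x Hy Hx H); lra. }
  assert (HCr : forall c, In c (vals PDC) -> (In c (top_gaps PDC k) <-> In c (map F (top_gaps PDG k)))).
  { apply C_rank; auto.
    - rewrite length_map; auto.
    - intros b Hb. apply in_map_iff in Hb as [a [<- Ha]]. destruct (HT a Ha) as [Hav [_ [H8 Hwa]]].
      apply (HF a Hav ltac:(lra)).
    - intros b c Hb Hc HnB. apply in_map_iff in Hb as [a [<- Ha]].
      assert (H1 := W1 a Ha). assert (H2 := W2 c Hc HnB). destruct (HT a Ha) as [_ [H3 _]]. lra. }
  unfold DS.
  destruct (top_gaps PDG k) as [|x l] eqn:ET.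
  { simpl in Hlen. lia. }
  destruct (fold_min x l) as [HA1 HA2].
  set (A := fold_right Rmin x l) in *.
  destruct (HT A HA1) as [HAv [_ [HA8 HAw]]].
  destruct (HF A HAv ltac:(lra)) as [FA1 [FA2 [FA3 FA4]]].
  assert (FAC : In (F A) (top_gaps PDC k)).
  { apply HCr; auto. apply in_map; auto. }
  destruct (top_gaps PDC k) as [|y l'] eqn:EC; [contradiction|].
  destruct (fold_min y l') as [HC1 HC2].
  replace (fold_right Rmin y l') with (F A).
  2:{ apply Rle_antisym.
      - apply HCr in HC1.
        + apply in_map_iff in HC1 as [a [Ha Hat]]. rewrite <- Ha.
          destruct (HT a Hat) as [Hav [_ [H8 Hwa]]].
          destruct (HF a Hav ltac:(lra)) as [G1 [G2 [G3 G4]]].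
          specialize (HA2 a Hat). apply FA4; auto; lra.
        + rewrite <- EC in HC1. apply top_in in HC1; tauto.
      - apply HC2; auto. }
  assert (HAlo : glo (vals PDG) A < A - 8*eps).
  { unfold gap_width in HA8. rewrite gap_lo_glo in HA8. lra. }
  exists (filter (fun pq => if Rle_dec A (pers (fst pq)) then true else false) M).
  split; [|split].
  - eapply perm_trans; [apply perm_filter, P1|]. rewrite filter_app, filter_map_comm.
    rewrite (filter_all_false _ U1). { rewrite app_nil_r. apply Permutation_refl. }
    intros p Hp. destruct (Rle_dec A (pers p)); auto. exfalso. specialize (FU1 p Hp). lra.
  - eapply perm_trans; [apply perm_filter, P2|]. rewrite filter_app, filter_map_comm.
    rewrite (filter_all_false _ U2).
    2:{ intros p Hp. destruct (Rle_dec (F A) (pers p)); auto. exfalso. specialize (FU2 p Hp). lra. }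
    rewrite app_nil_r. rewrite (filter_ext_in _ (fun pq => if Rle_dec A (pers (fst pq)) then true else false)).
    { apply Permutation_refl. }
    intros pq Hpq. destruct (HMp pq Hpq) as [H1 [H2 H3]]. apply Rabs_inv in H3.
    destruct (Rle_dec (F A) (pers (snd pq))), (Rle_dec A (pers (fst pq))); auto; exfalso.
    + assert (pers (fst pq) <= glo (vals PDG) A) by (apply glo_ge; auto; lra). lra.
    + apply n. apply FA4; auto. lra.
  - rewrite Forall_forall. intros pq Hpq. apply filter_In in Hpq. apply FM; tauto.
Qed.
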